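(* (1) For the $A_r$ $Q$-system with initial data $R_{\alpha,0}=R_{\alpha,1}=1$ for all $\alpha\in I_r$, $$\sum_{n\ge0}R_{1,n}t^n=1+t\,\frac{P_r(t)}{P_{r+1}(t)},\qquad P_m(t)=t^{m/2}\,U_m\!\left(\tfrac1{\sqrt t}-\sqrt t\right),$$ where $U_m$ is the Chebyshev polynomial of the second kind, $U_m(2\cos\theta)=\frac{\sin(m+1)\theta}{\sin\theta}$ (each $P_m$ is a polynomial in $t$). (2) For the $A_{\infty/2}$ $Q$-system with initial data $R_{\alpha,0}=R_{\alpha,1}=1$ for all $\alpha\ge1$, $$\sum_{n\ge0}R_{1,n}t^n=\frac{3-t-\sqrt{1-6t+t^2}}{2}=1+t+2t^2+6t^3+22t^4+90t^5+\cdots,$$ i.e. $R_{1,n}$ is the large Schröder number $S_{n-1}$ for $n\ge1$.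
   Context: For $r\ge1$, $I_r=\{1,\dots,r\}$, the $A_r$ $Q$-system is the family $(R_{\alpha,n})_{0\le\alpha\le r+1,n\in\mathbb Z}$ with $R_{0,n}=R_{r+1,n}=1$ and $R_{\alpha,n+1}R_{\alpha,n-1}=R_{\alpha,n}^2+R_{\alpha+1,n}R_{\alpha-1,n}$ for $\alpha\in I_r$, $n\in\mathbb Z$, determined by the values $R_{\alpha,0},R_{\alpha,1}$. The $A_{\infty/2}$ $Q$-system is the family $(R_{\alpha,n})_{\alpha\ge0,n\in\mathbb Z}$ with $R_{0,n}=1$ and the same relation for all $\alpha\ge1$ (no upper boundary condition), determined by $R_{\alpha,0},R_{\alpha,1}$ for $\alpha\ge1$. With the stated unit initial data all values are positive rational numbers. *)

(* Defs.v *)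
From HB Require Import structures.
From mathcomp Require Import all_boot all_order all_algebra.
Set Implicit Arguments. Unset Strict Implicit. Unset Printing Implicit Defensive.
Import Order.TTheory GRing.Theory Num.Theory.
Local Open Scope ring_scope.

(* Formal power series over rat are represented by their coefficient
   sequences nat -> rat; [fps_mul f g] is the Cauchy product. *)
Definition fps_mul (f g : nat -> rat) (k : nat) : rat :=
  \sum_(i < k.+1) f i * g (k - i)%N.

Definition is_fps_sqrt (s f : nat -> rat) : Prop :=
  s 0%N = 1 /\ forall k, fps_mul s s k = f k.

(* Chebyshev polynomials of the second kind, normalised by
   U_m(2 cos th) = sin((m+1) th) / sin th:
   U_0 = 1, U_1 = X, U_{m+2} = X U_{m+1} - U_m. *)
Fixpoint chebU_pair (m : nat) : {poly rat} * {poly rat} :=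
  match m with
  | 0%N => (1, 'X)
  | m'.+1 => let: (a, b) := chebU_pair m' in (b, 'X * b - a)
  end.
Definition chebU (m : nat) : {poly rat} := (chebU_pair m).1.

(* P_m(t) = t^{m/2} U_m(1/sqrt t - sqrt t).  Since U_m has the parity of m,
   U_m(x) = sum_i c_i x^i with c_i = 0 unless m - i is even, and
   t^{m/2} x^i = t^{(m-i)/2} (1-t)^i for x = (1-t)/sqrt t.  This is the
   literal expansion of the definition as a polynomial in t. *)
Definition chebP (m : nat) : {poly rat} :=
  \sum_(i < m.+1) (chebU m)`_i *: ('X ^+ (m - i)./2 * (1 - 'X) ^+ i).

Definition is_Ar_Qsystem (r : nat) (R : nat -> int -> rat) : Prop :=
  (forall n, R 0%N n = 1) /\ (forall n, R r.+1 n = 1) /\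
  (forall (a : nat) (n : int), (1 <= a <= r)%N ->
     R a (n + 1) * R a (n - 1) = R a n ^+ 2 + R a.+1 n * R a.-1 n).

Definition is_Ainf_Qsystem (R : nat -> int -> rat) : Prop :=
  (forall n, R 0%N n = 1) /\
  (forall (a : nat) (n : int), (1 <= a)%N ->
     R a (n + 1) * R a (n - 1) = R a n ^+ 2 + R a.+1 n * R a.-1 n).

(* Main.v *)
Require Import Defs.
From HB Require Import structures.
From mathcomp Require Import all_boot all_order all_algebra.
From Stdlib Require Import Ring Field.
Import Order.TTheory GRing.Theory Num.Theory.
Local Open Scope ring_scope.

Definition radd (x y : rat) : rat := x + y.
Definition rmul (x y : rat) : rat := x * y.
Definition ropp (x : rat) : rat := - x.
Definition rinv (x : rat) : rat := x^-1.
Definition rsub (x y : rat) : rat := x - y.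
Definition rdiv (x y : rat) : rat := x / y.
Definition rzero : rat := 0.
Definition rone : rat := 1.
Lemma rfield_th : field_theory rzero rone radd rmul rsub ropp rdiv rinv (@eq rat).
Proof.
constructor.
- constructor; rewrite /radd/rmul/ropp/rsub/rzero/rone.
  + exact: add0r. + exact: addrC. + exact: addrA. + exact: mul1r. + exact: mulrC.
  + exact: mulrA. + exact: mulrDl. + by []. + exact: subrr.
- by rewrite /rone/rzero.
- by [].
- by move=> p Hp; rewrite /rmul/rinv/rone mulVf //; apply/eqP.
Qed.
Add Field ratF : rfield_th.
Lemma raddE (x y : rat) : x + y = radd x y. Proof. by []. Qed.
Lemma rmulE (x y : rat) : x * y = rmul x y. Proof. by []. Qed.
Lemma roppE (x : rat) : - x = ropp x. Proof. by []. Qed.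
Lemma rinvE (x : rat) : x^-1 = rinv x. Proof. by []. Qed.
Lemma r0E : (0 : rat) = rzero. Proof. by []. Qed.
Lemma r1E : (1 : rat) = rone. Proof. by []. Qed.
Lemma rneq0 (x : rat) : x != 0 -> ~ x = rzero. Proof. by move/eqP. Qed.
Ltac rnorm := rewrite ?expr2 ?raddE ?rmulE ?roppE ?rinvE ?r0E ?r1E;
  match goal with |- ?l = ?r => change (@eq rat l r) end.

Notation Pr := {poly rat}.
Definition padd (x y : Pr) : Pr := x + y.
Definition pmul (x y : Pr) : Pr := x * y.
Definition popp (x : Pr) : Pr := - x.
Definition psub (x y : Pr) : Pr := x - y.
Definition pzero : Pr := 0.
Definition pone : Pr := 1.
Lemma pring_th : ring_theory pzero pone padd pmul psub popp (@eq Pr).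
Proof.
constructor; rewrite /padd/pmul/popp/psub/pzero/pone.
  + exact: add0r. + exact: addrC. + exact: addrA. + exact: mul1r. + exact: mulrC.
  + exact: mulrA. + exact: mulrDl. + by []. + exact: subrr.
Qed.
Add Ring polyR : pring_th.
Lemma paddE (x y : Pr) : x + y = padd x y. Proof. by []. Qed.
Lemma pmulE (x y : Pr) : x * y = pmul x y. Proof. by []. Qed.
Lemma poppE (x : Pr) : - x = popp x. Proof. by []. Qed.
Lemma p0E : (0 : Pr) = pzero. Proof. by []. Qed.
Lemma p1E : (1 : Pr) = pone. Proof. by []. Qed.
Ltac pnorm := rewrite ?paddE ?pmulE ?poppE ?p0E ?p1E;
  match goal with |- ?l = ?r => change (@eq Pr l r) end.
Ltac pnormin H := rewrite ?paddE ?pmulE ?poppE ?p0E ?p1E in H.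

Lemma inv_split (a b : rat) : a + b != 0 ->
  ((a+b)^-1)%:P * a%:P = 1 - ((a+b)^-1)%:P * b%:P :> Pr.
Proof.
move=> h; rewrite -!polyCM -polyC1 -polyCB; congr (_%:P).
rnorm. field. exact: rneq0.
Qed.

Lemma alg (a b c d e f : rat) (E1 E2 E3 E4 : Pr) : a+b != 0 -> c+d != 0 -> e+f != 0 ->
  E1 = (1 - c%:P*'X) * E2 - d%:P*'X*E3 -> E2 = (1 - e%:P * 'X)*E3 - f%:P * 'X * E4 ->
 ((a+b)^-1)%:P * (a%:P*E1 + b%:P*E2) = (1 - (a*(c+d)/(a+b))%:P * 'X) * (((c+d)^-1)%:P*(c%:P*E2 + d%:P*E3)) - (d*(e+f)/(c+d))%:P * 'X * (((e+f)^-1)%:P * (e%:P*E3 + f%:P*E4)).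
Proof.
move=> ha hc he -> ->.
have HA := @inv_split _ _ ha; have HC := @inv_split _ _ hc; have HE := @inv_split _ _ he.
rewrite !(polyCM, polyCD).
move: HA HC HE.
set IA := ((a+b)^-1)%:P; set IC := ((c+d)^-1)%:P; set IE := ((e+f)^-1)%:P.
move=> HA HC HE.
pnormin HA; pnormin HC; pnormin HE.
pnorm. ring [HA HC HE].
Qed.
Lemma rone_neq0 : ~ rone = rzero. Proof. by apply/eqP; exact: oner_neq0. Qed.
Ltac rfield := rnorm; field; repeat split; try exact: rneq0; try exact: rone_neq0.

Fixpoint ee (p q : nat -> rat) (r m : nat) {struct m} : Pr :=
  match m with
  | 0 => 1
  | m1.+1 => match m1 with
     | 0 => 1 - (p r.+1)%:P * 'X
     | m2.+1 => (1 - (p (r - m2)%N)%:P * 'X) * ee p q r m1 - (q (r - m2)%N)%:P * 'X * ee p q r m2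
     end
  end.

Lemma ee_rec p q r m : q r.+1 = 0 ->
  ee p q r m.+1 = (1 - (p (r.+1 - m)%N)%:P * 'X) * ee p q r m - (q (r.+1 - m)%N)%:P * 'X * ee p q r m.-1.
Proof.
move=> h; case: m => [|m] /=.
  by rewrite subn0 h polyC0 !mul0r subr0 mulr1.
by rewrite subSS.
Qed.

Definition sfun (p q : nat -> rat) a := p a + q a.
Definition pmu (p q : nat -> rat) a := p a.-1 * sfun p q a / sfun p q a.-1.
Definition qmu (p q : nat -> rat) a := q a * sfun p q a.+1 / sfun p q a.
Definition gg p q r m := ((sfun p q (r.+1 - m)%N)^-1)%:P *
   ((p (r.+1-m)%N)%:P * ee p q r m + (q (r.+1-m)%N)%:P * ee p q r m.-1).

Lemma ee_mut p q r : q r.+1 = 0 -> p 0%N = 1 -> q 0%N = 0 ->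
  (forall a, (a <= r.+1)%N -> sfun p q a != 0) ->
  forall m, (m <= r.+1)%N -> ee (pmu p q) (qmu p q) r m = gg p q r m.
Proof.
move=> hq hp0 hq0 hs.
elim/ltn_ind => m IH hm.
case: m IH hm => [|[|m2]] IH hm.
- rewrite /gg /= subn0 /sfun hq !addr0 !mulr1 polyC0 addr0 -polyCM mulVf //.
  by have := hs r.+1 (leqnn _); rewrite /sfun hq addr0.
- rewrite /gg /= subn1 /= /pmu /sfun hq addr0 mulr1.
  have hr := hs r (leqnSn _). have hr1 := hs r.+1 (leqnn _).
  rewrite /sfun hq addr0 in hr1. rewrite /sfun in hr.
  have HA := @inv_split _ _ hr.
  rewrite !(polyCM, polyCD, polyCB) in HA *.
  move: HA. set IA := ((p r + q r)^-1)%:P => HA.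
  pnormin HA. rewrite succnK. pnorm. ring [HA].
- have hal : (0 < r - m2)%N by rewrite subn_gt0.
  set al := (r - m2)%N.
  have h1 : (r.+1 - m2.+2)%N = al.-1 by rewrite subSS /al subnS.
  have h2 : (r.+1 - m2.+1)%N = al by rewrite subSS.
  have h3 : (r.+1 - m2)%N = al.+1 by rewrite subSn // -ltnS ltnW.
  have -> : ee (pmu p q) (qmu p q) r m2.+2 =
    (1 - (pmu p q al)%:P * 'X) * ee (pmu p q) (qmu p q) r m2.+1
     - (qmu p q al)%:P * 'X * ee (pmu p q) (qmu p q) r m2 by [].
  rewrite IH // ; last by rewrite ltnW.
  rewrite IH //; last by rewrite ltnW // ltnW.
  rewrite /gg h1 h2 h3 /pmu /qmu /sfun.
  have hs1 := hs al.-1; have hs2 := hs al; have hs3 := hs al.+1.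
  rewrite /sfun in hs1 hs2 hs3.
  symmetry; apply: (alg (p al.-1) (q al.-1) (p al) (q al) (p al.+1) (q al.+1)
     (ee p q r m2.+2) (ee p q r m2.+1) (ee p q r m2) (ee p q r m2.-1)).
  + by apply: hs1; rewrite /al (leq_trans (leq_pred _)) // ltnW // ltnS leq_subr.
  + by apply: hs2; rewrite /al ltnW // ltnS leq_subr.
  + by apply: hs3; rewrite /al ltnS leq_subr.
  + by rewrite (ee_rec _ _ _ _ hq) h2.
  + by rewrite (ee_rec _ _ _ _ hq) h3.
Qed.

Definition Pd (R : nat -> nat -> rat) (n a : nat) : rat :=
  R a n.+1 * R a.-1 n / (R a n * R a.-1 n.+1).
Definition Qd (R : nat -> nat -> rat) (r n a : nat) : rat :=
  if (0 < a <= r)%N then R a.+1 n.+1 * R a.-1 n / (R a n * R a n.+1) else 0.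

Definition QS (R : nat -> nat -> rat) (r : nat) :=
  [/\ (forall n, R 0%N n = 1), (forall n, R r.+1 n = 1),
      (forall a n, (0 < a <= r)%N ->
          R a n.+2 * R a n = R a n.+1 ^+ 2 + R a.+1 n.+1 * R a.-1 n.+1)
    & (forall a n, (a <= r.+1)%N -> 0 < R a n)].

Lemma QS_neq0 R r a n : QS R r -> (a <= r.+1)%N -> R a n != 0.
Proof. by case=> _ _ _ hp ha; rewrite gt_eqF // hp. Qed.

Lemma Pd0 R r n : QS R r -> Pd R n 0 = 1.
Proof. case=> h0 _ _ _; rewrite /Pd /= !h0; rfield. Qed.

Lemma sfunE R r n a : QS R r -> (a <= r.+1)%N ->
  sfun (Pd R n) (Qd R r n) a = R a.-1 n * R a n.+2 / (R a.-1 n.+1 * R a n.+1).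
Proof.
move=> hQ ha; have [h0 hr hrel hpos] := hQ.
rewrite /sfun /Pd /Qd.
case: a ha => [|a] ha.
  rewrite /= !h0 addr0; rfield.
have n1 := QS_neq0 _ _ _ n hQ ha; have n2 := QS_neq0 _ _ _ n.+1 hQ ha; have n3 := QS_neq0 _ _ _ n.+2 hQ ha.
have m1 : (a <= r.+1)%N by rewrite ltnW.
have n4 := QS_neq0 _ _ _ n hQ m1; have n5 := QS_neq0 _ _ _ n.+1 hQ m1.
case: ifP => hin.
- have := hrel a.+1 n hin => /= hE.
  have hE' : R a.+1 n.+2 = (R a.+1 n.+1 ^+ 2 + R a.+2 n.+1 * R a n.+1) / R a.+1 n.
    by rewrite -hE mulfK.
  rewrite hE' /=. rfield.
- have har : a = r.
    apply/eqP; rewrite eqn_leq -ltnS ha /= leqNgt.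
    by move: hin => /= ->.
  subst a. rewrite /= !hr addr0. rfield.
Qed.

Lemma sfun_neq0 R r n a : QS R r -> (a <= r.+1)%N -> sfun (Pd R n) (Qd R r n) a != 0.
Proof.
move=> hQ ha; rewrite (sfunE _ _ _ _ hQ ha).
have hb : (a.-1 <= r.+1)%N by rewrite (leq_trans (leq_pred _)).
by rewrite !mulf_neq0 ?invr_neq0 ?mulf_neq0 // (QS_neq0 _ _ _ _ hQ) .
Qed.

Lemma Pd_mut R r n a : QS R r -> (0 < a <= r.+1)%N ->
  Pd R n.+1 a = pmu (Pd R n) (Qd R r n) a.
Proof.
move=> hQ /andP[ha0 ha].
have hb : (a.-1 <= r.+1)%N by rewrite (leq_trans (leq_pred _)).
have hc : (a.-1.-1 <= r.+1)%N by rewrite (leq_trans (leq_pred _)).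
rewrite /pmu (sfunE _ _ _ _ hQ ha) (sfunE _ _ _ _ hQ hb) /Pd.
have := QS_neq0 _ _ _ n hQ ha; have := QS_neq0 _ _ _ n.+1 hQ ha; have := QS_neq0 _ _ _ n.+2 hQ ha.
have := QS_neq0 _ _ _ n hQ hb; have := QS_neq0 _ _ _ n.+1 hQ hb; have := QS_neq0 _ _ _ n.+2 hQ hb.
have := QS_neq0 _ _ _ n hQ hc; have := QS_neq0 _ _ _ n.+1 hQ hc; have := QS_neq0 _ _ _ n.+2 hQ hc.
move=> *. rfield.
Qed.

Lemma Qd_mut R r n a : QS R r -> (0 < a <= r.+1)%N ->
  Qd R r n.+1 a = qmu (Pd R n) (Qd R r n) a.
Proof.
move=> hQ /andP[ha0 ha].
rewrite /qmu /Qd ha0 /=.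
case: ifP => har; last by rewrite !mul0r.
have hb : (a.+1 <= r.+1)%N by [].
have hb' : (a <= r.+1)%N by rewrite ltnW.
have hc : (a.-1 <= r.+1)%N by rewrite (leq_trans (leq_pred _)).
rewrite (sfunE _ _ _ _ hQ hb) (sfunE _ _ _ _ hQ hb') /=.
have := QS_neq0 _ _ _ n hQ hb; have := QS_neq0 _ _ _ n.+1 hQ hb; have := QS_neq0 _ _ _ n.+2 hQ hb.
have := QS_neq0 _ _ _ n hQ hb'; have := QS_neq0 _ _ _ n.+1 hQ hb'; have := QS_neq0 _ _ _ n.+2 hQ hb'.
have := QS_neq0 _ _ _ n hQ hc; have := QS_neq0 _ _ _ n.+1 hQ hc; have := QS_neq0 _ _ _ n.+2 hQ hc.
move=> *. rfield.
Qed.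

Lemma ee_ext p q p' q' r : (forall a, (0 < a <= r.+1)%N -> p a = p' a /\ q a = q' a) ->
  forall m, (m <= r.+1)%N -> ee p q r m = ee p' q' r m.
Proof.
move=> h; elim/ltn_ind => m IH hm.
case: m IH hm => [|[|m2]] IH hm.
- by [].
- by have [e1 _] := h r.+1 (leqnn r.+1); rewrite /= e1.
- have [e1 e2] : p (r - m2)%N = p' (r - m2)%N /\ q (r - m2)%N = q' (r - m2)%N.
    by apply: h; rewrite subn_gt0 -ltnS hm /= (leq_trans (leq_subr m2 r) (leqnSn r)).
  have -> : ee p q r m2.+2 = (1 - (p (r - m2)%N)%:P * 'X) * ee p q r m2.+1
      - (q (r - m2)%N)%:P * 'X * ee p q r m2 by [].
  have -> : ee p' q' r m2.+2 = (1 - (p' (r - m2)%N)%:P * 'X) * ee p' q' r m2.+1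
      - (q' (r - m2)%N)%:P * 'X * ee p' q' r m2 by [].
  by rewrite e1 e2 !IH // ltnW // ltnW.
Qed.

Lemma QS_pos R r :
  (forall n, R 0%N n = 1) -> (forall n, R r.+1 n = 1) ->
  (forall a n, (0 < a <= r)%N ->
          R a n.+2 * R a n = R a n.+1 ^+ 2 + R a.+1 n.+1 * R a.-1 n.+1) ->
  (forall a, (0 < a <= r)%N -> R a 0%N = 1 /\ R a 1%N = 1) ->
  QS R r.
Proof.
move=> h0 hr hrel hinit; split => //.
suff H : forall n, (forall a, (a <= r.+1)%N -> 0 < R a n) /\
                   (forall a, (a <= r.+1)%N -> 0 < R a n.+1).
  by move=> a n ha; exact: (H n).1.
have base : forall a k, (k <= 1)%N -> (a <= r.+1)%N -> 0 < R a k.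
  move=> a k hk ha.
  case: a ha => [|a] ha; first by rewrite h0.
  case: (ltngtP a.+1 r.+1) => [hl|hg|->]; [|by rewrite ltnNge ha in hg|by rewrite hr].
  have [i0 i1] := hinit a.+1 hl.
  by case: k hk => [|[|]] // _; rewrite ?i0 ?i1.
elim=> [|n [IH1 IH2]]; first by split; move=> a ha; apply: base.
split=> // a ha.
case: a ha => [|a] ha; first by rewrite h0.
case: (ltngtP a.+1 r.+1) => [hl|hg|->]; [|by rewrite ltnNge ha in hg|by rewrite hr].
have hE := hrel a.+1 n hl.
have hpos : 0 < R a.+1 n.+1 ^+ 2 + R a.+2 n.+1 * R a n.+1.
  have h1 : 0 < R a.+1 n.+1 := IH2 _ (ltnW hl).
  have h2 : 0 < R a.+2 n.+1 := IH2 _ hl.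
  have h3 : 0 < R a n.+1 := IH2 _ (ltnW (ltnW hl)).
  by rewrite addr_gt0 // ?mulr_gt0 // exprn_gt0.
have hn : 0 < R a.+1 n := IH1 _ (ltnW hl).
have : R a.+1 n.+2 = (R a.+1 n.+1 ^+ 2 + R a.+2 n.+1 * R a n.+1) / R a.+1 n.
  by rewrite -hE mulfK // gt_eqF.
by move=> ->; rewrite divr_gt0.
Qed.

Definition E1 R r n := ee (Pd R n) (Qd R r n) r r.+1.
Definition E2 R r n := ee (Pd R n) (Qd R r n) r r.

Lemma Qd_top R r n : Qd R r n r.+1 = 0.
Proof. by rewrite /Qd ltnn andbF. Qed.
Lemma Qd_0 R r n : Qd R r n 0 = 0.
Proof. by []. Qed.

Lemma ee_next R r n (hQ : QS R r) m : (m <= r.+1)%N ->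
  ee (Pd R n.+1) (Qd R r n.+1) r m = gg (Pd R n) (Qd R r n) r m.
Proof.
move=> hm.
rewrite (@ee_ext _ _ (pmu (Pd R n) (Qd R r n)) (qmu (Pd R n) (Qd R r n))) //.
- apply: ee_mut => //; first exact: Qd_top. exact: (Pd0 _ _ _ hQ).
  by move=> a ha; exact: sfun_neq0.
- by move=> a ha; split; [exact: Pd_mut | exact: Qd_mut].
Qed.

Lemma E_step R r n (hQ : QS R r) :
  E1 R r n.+1 = E1 R r n /\
  E2 R r n = E1 R r n.+1 + 'X * (Pd R n.+1 1)%:P * E2 R r n.+1.
Proof.
have hp0 := Pd0 _ _ n hQ.
have hs0 : sfun (Pd R n) (Qd R r n) 0 = 1 by rewrite /sfun hp0 Qd_0 addr0.
have E1n : E1 R r n.+1 = E1 R r n.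
  rewrite /E1 ee_next // /gg subnn hs0 hp0 Qd_0 invr1 polyC0 polyC1 mul0r addr0 !mul1r.
  by [].
split => //.
rewrite E1n /E2 ee_next ?leqnSn // /gg subSnn.
rewrite (Pd_mut _ _ _ _ hQ) // /pmu /= hp0 hs0 divr1 mul1r.
have hs1 := sfun_neq0 _ _ n _ hQ (isT : (1 <= r.+1)%N).
have H : ((sfun (Pd R n) (Qd R r n) 1)^-1)%:P * (sfun (Pd R n) (Qd R r n) 1)%:P = 1 :> Pr.
  by rewrite -polyCM mulVf // polyC1.
rewrite /E1 (ee_rec _ _ _ r (Qd_top R r n)) subSnn.
move: H; set IS := ((sfun _ _ 1)^-1)%:P; set S := (sfun _ _ 1)%:P => H.
pnormin H; pnorm; ring [H].
Qed.

Lemma E1_const R r (hQ : QS R r) n : E1 R r n = E1 R r 0.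
Proof. by elim: n => // n IH; rewrite (E_step _ _ n hQ).1. Qed.

Lemma fps_main R r (hQ : QS R r) k : forall n,
  fps_mul (fun i => (E1 R r 0)`_i) (fun i => R 1%N (n + i)%N) k =
  R 1%N n * (E1 R r n + 'X * (Pd R n 1)%:P * E2 R r n)`_k.
Proof.
elim: k => [|k IH] n.
  rewrite /fps_mul big_ord1 /= addn0 coefD -mulrA coefXM /= addr0 (E1_const _ _ hQ n).
  by rewrite mulrC.
rewrite /fps_mul big_ord_recr /= subnn addn0.
have -> : \sum_(i < k.+1) (E1 R r 0)`_(widen_ord (leqnSn k.+1) i) * R 1%N (n + (k.+1 - widen_ord (leqnSn k.+1) i))%N
   = fps_mul (fun i => (E1 R r 0)`_i) (fun i => R 1%N (n.+1 + i)%N) k.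
  rewrite /fps_mul; apply: eq_bigr => i _ /=.
  by rewrite subSn ?addSnnS // -ltnS.
have hx : R 1%N n * Pd R n 1 = R 1%N n.+1.
  have [h0 _ _ _] := hQ.
  have n1 := QS_neq0 _ _ 1 n hQ (isT : (1 <= r.+1)%N).
  rewrite /Pd /= !h0 !mulr1. by rewrite mulrC mulfVK.
have -> : (E1 R r n + 'X * (Pd R n 1)%:P * E2 R r n)`_k.+1 = (E1 R r 0)`_k.+1 +
    Pd R n 1 * (E1 R r n.+1 + 'X * (Pd R n.+1 1)%:P * E2 R r n.+1)`_k.
  by rewrite coefD -mulrA coefXM /= coefCM (E1_const _ _ hQ n) -(E_step _ _ n hQ).2.
by rewrite IH mulrDr mulrA hx addrC mulrC.
Qed.

Lemma chebU_rec m : chebU m.+2 = 'X * chebU m.+1 - chebU m.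
Proof. by rewrite /chebU /=; case: (chebU_pair m) => a b. Qed.

Lemma chebU0 : chebU 0 = 1. Proof. by []. Qed.
Lemma chebU1 : chebU 1 = 'X. Proof. by []. Qed.

Lemma chebU_coef m i : (m < i)%N -> (chebU m)`_i = 0.
Proof.
elim/ltn_ind: m i => m IH i hi.
case: m IH hi => [|[|m]] IH hi.
- by rewrite chebU0 coef1; case: i hi.
- by rewrite chebU1 coefX; case: i hi => [|[|]].
- have h1 : (chebU m)`_i = 0.
    by apply: IH => //; apply: ltn_trans hi; rewrite ltnS leqnSn.
  rewrite chebU_rec coefB coefXM h1 subr0.
  case: i hi {h1} => [|i] hi //=.
  by rewrite IH.
Qed.

Definition T m i : Pr := 'X^((m - i)./2) * (1 - 'X)^+i.

Lemma chebP_K m K : (m < K)%N -> chebP m = \sum_(i < K) (chebU m)`_i *: T m i.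
Proof.
elim: K => [//|K IH] hK.
case: (ltnP m K) => hmK.
  by rewrite big_ord_recr /= chebU_coef // scale0r addr0 IH.
have -> : K = m by apply/eqP; rewrite eqn_leq hmK -ltnS hK.
by [].
Qed.

Lemma chebP_rec m : chebP m.+2 = (1 - 'X) * chebP m.+1 - 'X * chebP m.
Proof.
have A : \sum_(i < m.+3) ((if (nat_of_ord i == 0)%N then 0 else (chebU m.+1)`_(nat_of_ord i).-1) *: T m.+2 i)
    = (1 - 'X) * chebP m.+1.
  rewrite big_ord_recl /= scale0r add0r /chebP mulr_sumr; apply: eq_bigr => i _.
  rewrite /= add0n /bump leq0n add1n /T subSS exprS -scalerAr; congr (_ *: _).
  by rewrite mulrCA.
have B : \sum_(i < m.+3) (chebU m)`_i *: T m.+2 i = 'X * chebP m.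
  rewrite (@chebP_K m m.+3) ?mulr_sumr; last by rewrite ltnW // ltnW.
  apply: eq_bigr => i _.
  case: (leqP i m) => hi.
  - rewrite /T (_ : (m.+2 - i = (m - i).+2)%N); last by rewrite !subSn // ltnW.
    by rewrite /= exprS -mulrA -scalerAr.
  - by rewrite chebU_coef // !scale0r mulr0.
rewrite -A -B -sumrB /chebP; apply: eq_bigr => i _.
by rewrite chebU_rec coefB coefXM scalerBl.
Qed.

Lemma ee_flat r m : (m <= r.+1)%N ->
  ee (fun _ => 1) (fun a => if (a <= r)%N then 1 else 0) r m = chebP m.
Proof.
elim/ltn_ind: m => m IH hm.
case: m IH hm => [|[|m2]] IH hm.
- by rewrite /chebP big_ord1 chebU0 coef1 /= /T scale1r expr0 mulr1.
- rewrite /chebP big_ord_recr big_ord1 /= chebU1 coefX /= scale0r add0r coefX eqxx mulr1n scale1r.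
  by rewrite expr0 mul1r expr1 polyC1 mul1r.
- have -> : ee (fun _ => 1) (fun a => if (a <= r)%N then 1 else 0) r m2.+2 =
     (1 - 1%:P * 'X) * ee (fun _ => 1) (fun a => if (a <= r)%N then 1 else 0) r m2.+1
     - (if (r - m2 <= r)%N then 1 else 0)%:P * 'X * ee (fun _ => 1) (fun a => if (a <= r)%N then 1 else 0) r m2 by [].
  rewrite leq_subr polyC1 !mul1r chebP_rec !IH //.
  by apply: (leq_trans (leq_trans (leqnSn _) (leqnSn _)) hm).
  by apply: (leq_trans (leqnSn _) hm).
Qed.

Lemma core1 r R :
  (forall n, R 0%N n = 1) -> (forall n, R r.+1 n = 1) ->
  (forall a n, (0 < a <= r)%N ->
          R a n.+2 * R a n = R a n.+1 ^+ 2 + R a.+1 n.+1 * R a.-1 n.+1) ->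
  (forall a, (0 < a <= r)%N -> R a 0%N = 1 /\ R a 1%N = 1) ->
  forall k, fps_mul (fun i => (chebP r.+1)`_i) (R 1%N) k = (chebP r.+1 + 'X * chebP r)`_k.
Proof.
move=> h0 hr hrel hinit k.
have hQ := QS_pos _ _ h0 hr hrel hinit.
have h01 : forall a, (a <= r.+1)%N -> R a 0%N = 1 /\ R a 1%N = 1.
  move=> a ha; case: a ha => [|a] ha; first by rewrite !h0.
  case: (ltngtP a.+1 r.+1) => [hl|hg|->]; [exact: hinit|by rewrite ltnNge ha in hg|by rewrite !hr].
have hext : forall a, (0 < a <= r.+1)%N ->
    Pd R 0 a = (fun _ => 1) a /\ Qd R r 0 a = (fun a => if (a <= r)%N then 1 else 0) a.
  move=> a /andP[ha0 ha]; split.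
  - have [e1 e2] := h01 a ha.
    have [e3 e4] := h01 a.-1 (leq_trans (leq_pred _) ha).
    by rewrite /Pd e1 e2 e3 e4; rfield.
  - rewrite /Qd ha0 /=; case: ifP => // har.
    have [e1 e2] := h01 a (leq_trans har (leqnSn _)).
    have [e3 e4] := h01 a.+1 har.
    have [e5 e6] := h01 a.-1 (leq_trans (leq_pred _) (leq_trans har (leqnSn _))).
    by rewrite e1 e2 e4 e5; rfield.
have HE1 : E1 R r 0 = chebP r.+1 by rewrite /E1 (@ee_ext _ _ _ _ _ hext) // ee_flat.
have HE2 : E2 R r 0 = chebP r by rewrite /E2 (@ee_ext _ _ _ _ _ hext) ?leqnSn // ee_flat ?leqnSn.
have HP : Pd R 0 1 = 1 by have [] := hext 1%N (isT : (0 < 1 <= r.+1)%N).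
have := fps_main _ _ hQ k 0.
rewrite HE1 HE2 HP (h01 1%N (isT : (1 <= r.+1)%N)).1 mul1r polyC1 mulr1.
by [].
Qed.

Fixpoint qpair (r n : nat) : (nat -> rat) * (nat -> rat) :=
  match n with
  | 0 => (fun _ => 1, fun _ => 1)
  | n'.+1 => let: (u, v) := qpair r n' in
     (v, fun a => if (0 < a <= r)%N then (v a ^+ 2 + v a.+1 * v a.-1) / u a else 1)
  end.
Definition Qr r a n := (qpair r n).1 a.

Lemma Qr_SS r a n : Qr r a n.+2 =
  if (0 < a <= r)%N then (Qr r a n.+1 ^+ 2 + Qr r a.+1 n.+1 * Qr r a.-1 n.+1) / Qr r a n else 1.
Proof. by rewrite /Qr /=; case: (qpair r n). Qed.
Lemma Qr0 r a : Qr r a 0 = 1. Proof. by []. Qed.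
Lemma Qr1 r a : Qr r a 1 = 1. Proof. by []. Qed.

Lemma Qr_pos r n : (forall a, 0 < Qr r a n) /\ (forall a, 0 < Qr r a n.+1).
Proof.
elim: n => [|n [IH1 IH2]]; first by split=> a; rewrite ?Qr0 ?Qr1 ltr01.
split=> // a; rewrite Qr_SS; case: ifP => _; last exact: ltr01.
by rewrite divr_gt0 // addr_gt0 // ?mulr_gt0 // exprn_gt0.
Qed.

Lemma Qr_core r k : fps_mul (fun i => (chebP r.+1)`_i) (Qr r 1%N) k = (chebP r.+1 + 'X * chebP r)`_k.
Proof.
apply: core1.
- by move=> n; case: n => [|[|n]] //; rewrite Qr_SS.
- by move=> n; case: n => [|[|n]] //; rewrite Qr_SS ltnn andbF.
- move=> a n ha; rewrite Qr_SS ha mulfVK //.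
  by rewrite gt_eqF // (Qr_pos r n).1.
- by [].
Qed.

Lemma Ainf_pos (R : nat -> nat -> rat) :
  (forall n, R 0%N n = 1) ->
  (forall a n, (0 < a)%N -> R a n.+2 * R a n = R a n.+1 ^+ 2 + R a.+1 n.+1 * R a.-1 n.+1) ->
  (forall a, (0 < a)%N -> R a 0%N = 1 /\ R a 1%N = 1) ->
  forall n, (forall a, 0 < R a n) /\ (forall a, 0 < R a n.+1).
Proof.
move=> h0 hrel hinit.
elim=> [|n [IH1 IH2]].
  by split=> -[|a]; rewrite ?h0 ?(hinit a.+1 _).1 ?(hinit a.+1 _).2 ?ltr01.
split=> // -[|a]; first by rewrite h0 ltr01.
have hE := hrel a.+1 n isT.
have : R a.+1 n.+2 = (R a.+1 n.+1 ^+ 2 + R a.+2 n.+1 * R a n.+1) / R a.+1 n.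
  by rewrite -hE mulfK // gt_eqF.
move=> ->; by rewrite divr_gt0 // addr_gt0 // ?mulr_gt0 // exprn_gt0.
Qed.

Lemma lightcone (R : nat -> nat -> rat) r :
  (forall n, R 0%N n = 1) ->
  (forall a n, (0 < a)%N -> R a n.+2 * R a n = R a n.+1 ^+ 2 + R a.+1 n.+1 * R a.-1 n.+1) ->
  (forall a, (0 < a)%N -> R a 0%N = 1 /\ R a 1%N = 1) ->
  forall n, (forall a, (a + n <= r.+1)%N -> R a n = Qr r a n) /\
            (forall a, (a + n.+1 <= r.+1)%N -> R a n.+1 = Qr r a n.+1).
Proof.
move=> h0 hrel hinit.
have hpos := Ainf_pos _ h0 hrel hinit.
have base : forall a k, (k <= 1)%N -> R a k = Qr r a k.
  move=> a k hk; case: k hk => [|[|k]] // _; case: a => [|a]; rewrite ?h0 //;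
    have [e1 e2] := hinit a.+1 isT; by rewrite ?e1 ?e2.
elim=> [|n [IH1 IH2]]; first by split=> a _; apply: base.
split=> // -[|a] ha; first by rewrite h0 Qr_SS.
have har : (0 < a.+1 <= r)%N.
  move: ha; rewrite addSn !addnS !ltnS => ha.
  by rewrite /= (leq_trans _ ha) // ltnS leqW // leq_addr.
rewrite Qr_SS har.
have hE := hrel a.+1 n isT.
have hn : R a.+1 n != 0 by rewrite gt_eqF // (hpos n).1.
have -> : R a.+1 n.+2 = (R a.+1 n.+1 ^+ 2 + R a.+2 n.+1 * R a n.+1) / R a.+1 n.
  by rewrite -hE mulfK.
rewrite -IH1 -?IH2 //.
all: apply: (leq_trans _ ha); rewrite /= ?addSn ?addnS ?ltnS //.
all: by rewrite leqW // leqW.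
Qed.


Definition eqN (N : nat) (a b : Pr) := forall j, (j < N)%N -> a`_j = b`_j.

Lemma eqN_mul N a b c : eqN N a b -> eqN N (a * c) (b * c).
Proof.
move=> h j hj; rewrite !coefM; apply: eq_bigr => i _; rewrite h //.
by apply: leq_ltn_trans hj; rewrite -ltnS.
Qed.

Lemma eqN0_mul N a c : eqN N a 0 -> eqN N (a * c) 0.
Proof. by move=> h; rewrite -(mul0r c); apply: eqN_mul. Qed.

Lemma eqN0_add N a b : eqN N a 0 -> eqN N b 0 -> eqN N (a + b) 0.
Proof. by move=> ha hb j hj; rewrite coefD ha // hb // coef0 addr0. Qed.

Lemma eqN0_opp N a : eqN N a 0 -> eqN N (- a) 0.
Proof. by move=> ha j hj; rewrite coefN ha // coef0 oppr0. Qed.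

Lemma cancel_unit N (U V : Pr) : U`_0 = 1 -> eqN N (U * V) 0 -> eqN N V 0.
Proof.
move=> hU hUV j; elim/ltn_ind: j => j IH hj.
have := hUV j hj; rewrite coefM big_ord_recl /= hU mul1r subn0 coef0 big1 ?addr0 //.
move=> i _.
rewrite IH ?coef0 ?mulr0 //.
- by have hi := ltn_ord i; rewrite /bump /= add1n ltn_subrL /= (leq_ltn_trans (leq0n i) hi).
- by apply: leq_ltn_trans hj; rewrite leq_subr.
Qed.

Lemma chebP0 : chebP 0 = 1.
Proof. by rewrite /chebP big_ord1 chebU0 coef1 /= /T scale1r expr0 mulr1. Qed.
Lemma chebP1 : chebP 1 = 1 - 'X.
Proof.
rewrite /chebP big_ord_recr big_ord1 /= chebU1 coefX /= scale0r add0r coefX eqxx mulr1n scale1r.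
by rewrite /T /= expr0 mul1r expr1.
Qed.

Lemma chebP_c0 m : (chebP m)`_0 = 1.
Proof.
elim/ltn_ind: m => m IH.
case: m IH => [|[|m]] IH.
- by rewrite chebP0 coef1.
- by rewrite chebP1 coefB coef1 coefX.
- by rewrite chebP_rec coefB mulrBl mul1r coefB !coefXM /= subr0 subr0 IH.
Qed.

Lemma fps_poly N (A : Pr) b k : (k < N)%N ->
  fps_mul (fun i => A`_i) b k = (A * \poly_(i < N) b i)`_k.
Proof.
move=> hk; rewrite coefM /fps_mul; apply: eq_bigr => i _.
by rewrite coef_poly ifT //; apply: leq_ltn_trans hk; rewrite leq_subr.
Qed.

Lemma fps_poly2 N a b k : (k < N)%N ->
  fps_mul a b k = (\poly_(i < N) a i * \poly_(i < N) b i)`_k.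
Proof.
move=> hk; rewrite coefM /fps_mul; apply: eq_bigr => i _.
rewrite !coef_poly !ifT //; apply: leq_ltn_trans hk; last by rewrite -ltnS.
by rewrite leq_subr.
Qed.

Lemma idV (x p1 p0 g : Pr) :
  ((1 - x) * p1 - x * p0) * p1 * ((g - 1) * (1 - x - (g - 1)) - x) =
  (((1 - x) * p1 - x * p0) * g - (((1 - x) * p1 - x * p0) + x * p1)) *
  (((1 - x) * p1 - x * p0) - (p1 * g - (p1 + x * p0))) - x * p1 * (p1 * g - (p1 + x * p0)).
Proof. pnorm. ring. Qed.

Lemma idW (x g : Pr) :
  ((1 + 1 + 1) - x - (1 + 1) * g) * ((1 + 1 + 1) - x - (1 + 1) * g) =
  1 - (1 + 1 + 1 + 1 + 1 + 1) * x + x * x - (1 + 1 + 1 + 1) * ((g - 1) * (1 - x - (g - 1)) - x).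
Proof. pnorm. ring. Qed.

Lemma part2 (R : nat -> nat -> rat) :
  (forall n, R 0%N n = 1) ->
  (forall a n, (0 < a)%N -> R a n.+2 * R a n = R a n.+1 ^+ 2 + R a.+1 n.+1 * R a.-1 n.+1) ->
  (forall a, (0 < a)%N -> R a 0%N = 1 /\ R a 1%N = 1) ->
  forall k, fps_mul (fun n => ((3%:P - 'X : Pr))`_n - 2 * R 1%N n)
                    (fun n => ((3%:P - 'X : Pr))`_n - 2 * R 1%N n) k
            = (1 - 6%:P * 'X + 'X ^+ 2 : Pr)`_k.
Proof.
move=> h0 hrel hinit k.
set N := k.+1.
have hx1 : forall n, (n <= N)%N -> R 1%N n = Qr N 1 n.
  by move=> n hn; apply: (lightcone _ N h0 hrel hinit n).1; rewrite add1n ltnS.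
have hx2 : forall n, (n <= N.+1)%N -> R 1%N n = Qr N.+1 1 n.
  by move=> n hn; apply: (lightcone _ N.+1 h0 hrel hinit n).1; rewrite add1n ltnS.
set g := \poly_(i < N) R 1%N i.
set P0 := chebP N; set P1 := chebP N.+1; set P2 := chebP N.+2.
set D1 := P1 * g - (P1 + 'X * P0).
set D2 := P2 * g - (P2 + 'X * P1).
have HD1 : eqN N D1 0.
  move=> j hj; rewrite coef0 /D1 coefB; apply/eqP; rewrite subr_eq0; apply/eqP.
  rewrite -fps_poly // -(Qr_core N j).
  apply: eq_bigr => i _; rewrite hx1 //.
  by apply: leq_trans (leq_subr _ _) (ltnW hj).
have HD2 : eqN N D2 0.
  move=> j hj; rewrite coef0 /D2 coefB; apply/eqP; rewrite subr_eq0; apply/eqP.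
  rewrite -fps_poly // -(Qr_core N.+1 j).
  apply: eq_bigr => i _; rewrite hx2 //.
  by apply: leq_trans (leq_subr _ _) (leqW (ltnW hj)).
set V := (g - 1) * (1 - 'X - (g - 1)) - 'X.
have HV : eqN N (P2 * P1 * V) 0.
  have -> : P2 * P1 * V = D2 * (P2 - D1) - 'X * P1 * D1.
    by rewrite /D1 /D2 /V /P2 chebP_rec -/P1 -/P0 idV.
  apply: eqN0_add; first by apply: eqN0_mul.
  by apply: eqN0_opp; rewrite mulrC; apply: eqN0_mul.
have HV0 : eqN N V 0.
  apply: cancel_unit HV.
  by rewrite coefM big_ord1 /P1 /P2 !chebP_c0 mulr1.
set W := 3%:P - 'X - 2%:P * g.
have HW : eqN N (\poly_(i < N) (((3%:P - 'X : Pr))`_i - 2 * R 1%N i)) W.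
  move=> j hj; rewrite coef_poly hj /W !coefB coefCM coef_poly hj.
  by [].
rewrite (fps_poly2 N _ _ _ (ltnSn k)).
rewrite (eqN_mul _ _ _ _ HW) // mulrC (eqN_mul _ _ _ _ HW) //.
have -> : W * W = 1 - 6%:P * 'X + 'X ^+ 2 - 4%:P * V.
  have n2 : (2%:P = 1 + 1 :> Pr) by rewrite polyC_natr !mulrS mulr0n addr0.
  have n3 : (3%:P = 1 + 1 + 1 :> Pr) by rewrite polyC_natr !mulrS mulr0n addr0 addrA.
  have n4 : (4%:P = 1 + 1 + 1 + 1 :> Pr) by rewrite polyC_natr !mulrS mulr0n addr0 !addrA.
  have n6 : (6%:P = 1 + 1 + 1 + 1 + 1 + 1 :> Pr) by rewrite polyC_natr !mulrS mulr0n addr0 !addrA.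
  by rewrite /W /V n2 n3 n4 n6 expr2 idW.
by rewrite coefB coefCM HV0 // coef0 mulr0 subr0.
Qed.

Lemma int_S1 (n : nat) : (Posz n.+1 + 1 = Posz n.+2)%R.
Proof. by rewrite -PoszD addn1. Qed.
Lemma int_P1 (n : nat) : (Posz n.+1 - 1 = Posz n)%R.
Proof. by rewrite -[n.+1]addn1 PoszD addrK. Qed.

Theorem mainTheorem15 :
  (forall (r : nat) (R : nat -> int -> rat), (1 <= r)%N ->
     is_Ar_Qsystem r R ->
     (forall a : nat, (1 <= a <= r)%N -> R a 0 = 1 /\ R a 1 = 1) ->
     (* P_{r+1}(t) * sum_n R_{1,n} t^n = P_{r+1}(t) + t P_r(t) *)
     forall k : nat,
       fps_mul (fun i => (chebP r.+1)`_i) (fun n => R 1%N (Posz n)) k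
       = (chebP r.+1 + 'X * chebP r)`_k)
  /\
  (forall R : nat -> int -> rat,
     is_Ainf_Qsystem R ->
     (forall a : nat, (1 <= a)%N -> R a 0 = 1 /\ R a 1 = 1) ->
     (* 3 - t - 2 sum_n R_{1,n} t^n = sqrt(1 - 6t + t^2) *)
     is_fps_sqrt
       (fun n => ((3%:P - 'X : {poly rat})`_n - 2 * R 1%N (Posz n)))
       (fun n => (1 - 6%:P * 'X + 'X ^+ 2 : {poly rat})`_n)).
Proof.
split.
- move=> r R _ [h0 [hr hrel]] hinit k.
  apply: (core1 r (fun a n => R a (Posz n))).
  + by move=> n; apply: h0.
  + by move=> n; apply: hr.
  + move=> a n ha; have := hrel a (Posz n.+1) ha.
    by rewrite int_S1 int_P1.
  + exact: hinit.
- move=> R [h0 hrel] hinit; split.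
  + by rewrite coefB coefC coefX (hinit 1%N isT).1.
  + apply: (part2 (fun a n => R a (Posz n))).
    * by move=> n; apply: h0.
    * move=> a n ha; have := hrel a (Posz n.+1) ha.
      by rewrite int_S1 int_P1.
    * exact: hinit.
Qed.
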